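(* Let $\mathbf{C}$ be a category with a stable system of monics $\mathcal{M}$ that has pullbacks along $\mathcal{M}$-morphisms and has final pullback complements (FPCs) along $\mathcal{M}$-morphisms. Then the target functor $T:\mathsf{FPC}_v(\mathbf{C},\mathcal{M})\to\mathbf{C}|_{\mathcal{M}}$ is a Grothendieck opfibration.
   Context: A stable system of monics $\mathcal{M}$ in $\mathbf{C}$ is a class of monomorphisms containing all isomorphisms, closed under composition, and stable under pullback; $\rightarrowtail$ denotes morphisms in $\mathcal{M}$. ''Has pullbacks along $\mathcal{M}$-morphisms'': pullbacks of cospans $A\to B\leftarrowtail B'$ exist. Final pullback complement (FPC): for composable $A\xrightarrow{f}B\xrightarrow{m}C$, a pair $A\xrightarrow{n}F\xrightarrow{g}C$ with $g\circ n=m\circ f$ such that this square is a pullback, and such that for every pullback square $m\circ u=w\circ v$ (with $u:X\to B$, $v:X\to Y$, $w:Y\to C$) and every $t:X\to A$ with $f\circ t=u$, there is a unique $y:Y\to F$ with $g\circ y=w$ and $y\circ v=n\circ t$. ''Has FPCs along $\mathcal{M}$-morphisms'': FPCs exist whenever $m\in\mathcal{M}$. $\mathbf{C}|_{\mathcal{M}}$ is the category with the objects of $\mathbf{C}$ and the $\mathcal{M}$-morphisms as morphisms. The category $\mathsf{FPC}_v(\mathbf{C},\mathcal{M})$: objects are morphisms $f:A\to B$ of $\mathbf{C}$; a morphism from $f:A\to B$ to $f':A'\to B'$ is a pair $(\alpha,\beta)$ of $\mathcal{M}$-morphisms $\alpha:A\rightarrowtail A'$, $\beta:B\rightarrowtail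 B'$ with $\beta\circ f=f'\circ\alpha$ such that $(\alpha,f')$ is an FPC of $(f,\beta)$; composition is componentwise (vertical pasting). The target functor $T$ sends $f:A\to B$ to $B$ and $(\alpha,\beta)$ to $\beta$. For a functor $P:\mathbf{E}\to\mathbf{B}$, a morphism $\varphi:e\to e'$ is op-Cartesian if for every $\psi:e\to e''$ and $g:P(e')\to P(e'')$ with $g\circ P(\varphi)=P(\psi)$ there is a unique $\chi:e'\to e''$ with $\chi\circ\varphi=\psi$ and $P(\chi)=g$; $P$ is a Grothendieck opfibration if for every $f:b\to b'$ and every $e$ with $P(e)=b$ there is an op-Cartesian $\varphi:e\to e'$ with $P(\varphi)=f$. *)

(* Defs.v *)
Set Implicit Arguments.
Unset Strict Implicit.

Record Category := {
  Ob :> Type;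
  Hom : Ob -> Ob -> Type;
  comp : forall x y z : Ob, Hom y z -> Hom x y -> Hom x z;
  idm : forall a : Ob, Hom a a;
  comp_assoc : forall a b c d (h : Hom c d) (g : Hom b c) (f : Hom a b),
      comp h (comp g f) = comp (comp h g) f;
  comp_id_l : forall a b (f : Hom a b), comp (idm b) f = f;
  comp_id_r : forall a b (f : Hom a b), comp f (idm a) = f
}.

Arguments Hom {c} _ _ : rename.
Arguments comp {c x y z} _ _ : rename.
Arguments idm {c} _ : rename.

Notation "g \o f" := (comp g f) (at level 40, left associativity).

Section Defs.
Variable C : Category.

Definition is_mono {A B : C} (m : Hom A B) : Prop :=
  forall (X : C) (g h : Hom X A), m \o g = m \o h -> g = h.

Definition is_iso {A B : C} (f : Hom A B) : Prop :=
  exists g : Hom B A, g \o f = idm A /\ f \o g = idm B.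

Definition is_pullback {P X Y Z : C} (p1 : Hom P X) (p2 : Hom P Y)
    (f : Hom X Z) (g : Hom Y Z) : Prop :=
  f \o p1 = g \o p2 /\
  forall (Q : C) (q1 : Hom Q X) (q2 : Hom Q Y), f \o q1 = g \o q2 ->
    exists! u : Hom Q P, p1 \o u = q1 /\ p2 \o u = q2.

Definition morph_class := forall A B : C, Hom A B -> Prop.

Definition stable_system_of_monics (M : morph_class) : Prop :=
  (forall A B (m : Hom A B), M A B m -> is_mono m) /\
  (forall A B (f : Hom A B), is_iso f -> M A B f) /\
  (forall A B D (f : Hom A B) (g : Hom B D), M A B f -> M B D g -> M A D (g \o f)) /\
  (forall P X Y Z (p1 : Hom P X) (p2 : Hom P Y) (f : Hom X Z) (m : Hom Y Z),
      M Y Z m -> is_pullback p1 p2 f m -> M P X p1).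

Definition has_pullbacks_along (M : morph_class) : Prop :=
  forall (A B B' : C) (f : Hom A B) (m : Hom B' B), M B' B m ->
    exists (P : C) (p1 : Hom P A) (p2 : Hom P B'), is_pullback p1 p2 f m.

Definition is_FPC {A B D F : C} (f : Hom A B) (m : Hom B D)
    (n : Hom A F) (g : Hom F D) : Prop :=
  g \o n = m \o f /\
  is_pullback f n m g /\
  forall (X Y : C) (u : Hom X B) (v : Hom X Y) (w : Hom Y D),
    is_pullback u v m w ->
    forall t : Hom X A, f \o t = u ->
      exists! y : Hom Y F, g \o y = w /\ y \o v = n \o t.

Definition has_FPCs_along (M : morph_class) : Prop :=
  forall (A B D : C) (f : Hom A B) (m : Hom B D), M B D m ->
    exists (F : C) (n : Hom A F) (g : Hom F D), is_FPC f m n g.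

Definition FPCv_hom (M : morph_class) {A B A' B' : C}
    (f : Hom A B) (f' : Hom A' B') (alpha : Hom A A') (beta : Hom B B') : Prop :=
  M A A' alpha /\ M B B' beta /\ beta \o f = f' \o alpha /\
  is_FPC f beta alpha f'.

(* Op-Cartesianness of the FPC_v morphism (alpha, beta) : f --> f' w.r.t. the
   target functor T : FPC_v(C,M) -> C|_M  (T(f : A -> B) = B,
   T(alpha, beta) = beta); composition in FPC_v is componentwise. *)
Definition T_opcartesian (M : morph_class) {A B A' B' : C}
    (f : Hom A B) (f' : Hom A' B') (alpha : Hom A A') (beta : Hom B B') : Prop :=
  forall (A'' B'' : C) (f'' : Hom A'' B'')
         (psia : Hom A A'') (psib : Hom B B''),
    FPCv_hom M f f'' psia psib ->
    forall g : Hom B' B'', M B' B'' g -> g \o beta = psib ->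
      exists! chi : Hom A' A'' * Hom B' B'',
        FPCv_hom M f' f'' (fst chi) (snd chi) /\
        (fst chi \o alpha = psia /\ snd chi \o beta = psib) /\
        snd chi = g.

Definition target_is_opfibration (M : morph_class) : Prop :=
  forall (A B B' : C) (f : Hom A B) (beta : Hom B B'), M B B' beta ->
    exists (A' : C) (f' : Hom A' B') (alpha : Hom A A'),
      FPCv_hom M f f' alpha beta /\ T_opcartesian M f f' alpha beta.

End Defs.

(* Main.v *)
Require Import Defs.

Section Helpers.
Context {C : Category}.

Lemma pb_sym {P X Y Z : C} (p1 : Hom P X) (p2 : Hom P Y) (f : Hom X Z) (g : Hom Y Z) :
  is_pullback p1 p2 f g -> is_pullback p2 p1 g f.
Proof.
  intros [Hc Hu]. split; [symmetry; exact Hc|].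
  intros Q q1 q2 E. destruct (Hu Q q2 q1 (eq_sym E)) as [u [[H1 H2] Hun]].
  exists u. split; [split; assumption|].
  intros u' [H1' H2']. apply Hun; split; assumption.
Qed.

Lemma pb_mono {P X Y Z W : C} (p1 : Hom P X) (p2 : Hom P Y) (f : Hom X Z) (g : Hom Y Z)
  (h : Hom Z W) :
  is_pullback p1 p2 f g -> is_mono h -> is_pullback p1 p2 (h \o f) (h \o g).
Proof.
  intros [Hc Hu] Hm. split.
  - rewrite <- !comp_assoc, Hc; reflexivity.
  - intros Q q1 q2 E. apply Hu. apply Hm. rewrite !comp_assoc; exact E.
Qed.

Lemma pb_paste {P X B B' Y B'' : C} (p1 : Hom P X) (p2 : Hom P B) (u : Hom X B')
  (be : Hom B B') (v : Hom X Y) (g : Hom B' B'') (w : Hom Y B'') :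
  is_pullback p1 p2 u be -> is_pullback u v g w ->
  is_pullback p2 (v \o p1) (g \o be) w.
Proof.
  intros [Hc1 Hu1] [Hc2 Hu2]. split.
  - rewrite <- comp_assoc, <- Hc1, comp_assoc, Hc2, comp_assoc. reflexivity.
  - intros Q q1 q2 E.
    assert (E' : g \o (be \o q1) = w \o q2) by (rewrite comp_assoc; exact E).
    destruct (Hu2 Q (be \o q1) q2 E') as [x [[Hx1 Hx2] Hxu]].
    destruct (Hu1 Q x q1 Hx1) as [z [[Hz1 Hz2] Hzu]].
    exists z. split.
    + split; [exact Hz2|]. rewrite <- comp_assoc, Hz1. exact Hx2.
    + intros z' [Hz1' Hz2']. apply Hzu. split; [|exact Hz1'].
      symmetry. apply Hxu. split.
      * rewrite comp_assoc, Hc1, <- comp_assoc, Hz1'. reflexivity.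
      * rewrite comp_assoc. exact Hz2'.
Qed.

End Helpers.
Arguments pb_sym {C P X Y Z p1 p2 f g} _.
Arguments pb_mono {C P X Y Z W p1 p2 f g h} _ _.
Arguments pb_paste {C P X B B' Y B'' p1 p2 u be v g w} _ _.

Theorem mainTheorem3 (C : Category) (M : morph_class C) :
  stable_system_of_monics M ->
  has_pullbacks_along M ->
  has_FPCs_along M ->
  target_is_opfibration M.
Proof.
  intros [Mmono [Miso [Mcomp Mstab]]] Hpb Hfpc.
  intros A B B' f beta Hb.
  destruct (Hfpc A B B' f beta Hb) as [A' [alpha [f' HF]]].
  pose proof HF as [Hc [Hpbk Huniv]].
  assert (Ma : M A A' alpha) by exact (Mstab _ _ _ _ alpha f f' beta Hb (pb_sym Hpbk)).
  exists A', f', alpha. split.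
  { split; [exact Ma|]. split; [exact Hb|]. split; [exact (eq_sym Hc)|exact HF]. }
  intros A'' B'' f'' psia psib [Mpa [Mpb [Hcp HFp]]] g Mg Hg.
  subst psib.
  destruct HFp as [Hcp' [Hpbp Hunivp]].
  pose proof (Mmono _ _ g Mg) as gm.
  pose proof (pb_mono Hpbk gm) as gpb.
  destruct (Hunivp A A' f alpha (g \o f') gpb (idm A) (comp_id_r f))
    as [chi [[Hc1 Hc2] Hcu]].
  assert (Hc2' : chi \o alpha = psia) by (rewrite comp_id_r in Hc2; exact Hc2).
  assert (Hpb1 : is_pullback f' chi g f'').
  { split; [exact (eq_sym Hc1)|].
    intros Q q1 q2 E.
    destruct (Hpb Q B' B q1 beta Hb) as [P [p1 [p2 Hpq]]].
    pose proof Hpq as [Hq _].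
    assert (E2 : (g \o beta) \o p2 = f'' \o (q2 \o p1)).
    { rewrite <- comp_assoc, <- Hq, comp_assoc, E, comp_assoc. reflexivity. }
    destruct (proj2 Hpbp P p2 (q2 \o p1) E2) as [t [[Ht1 Ht2] Htu]].
    destruct (Huniv P Q p2 p1 q1 (pb_sym Hpq) t Ht1) as [y [[Hy1 Hy2] Hyu]].
    exists y. split.
    - split; [exact Hy1|].
      destruct (Hunivp P Q p2 p1 (g \o q1) (pb_mono (pb_sym Hpq) gm) t Ht1)
        as [z [_ Hzu]].
      transitivity z; [symmetry|]; apply Hzu; split.
      + rewrite comp_assoc, Hc1, <- comp_assoc, Hy1. reflexivity.
      + rewrite <- comp_assoc, Hy2, comp_assoc, Hc2'. reflexivity.
      + exact (eq_sym E).
      + exact (eq_sym Ht2).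
    - intros u' [Hu1 Hu2].
      assert (E3 : beta \o p2 = f' \o (u' \o p1)).
      { rewrite comp_assoc, Hu1. exact (eq_sym Hq). }
      destruct (proj2 Hpbk P p2 (u' \o p1) E3) as [t' [[Ht1' Ht2'] _]].
      assert (tt : t = t').
      { apply Htu. split; [exact Ht1'|].
        rewrite <- Hc2', <- comp_assoc, Ht2', comp_assoc, Hu2. reflexivity. }
      subst t'.
      apply Hyu. split; [exact Hu1|]. exact (eq_sym Ht2'). }
  exists (chi, g). split.
  2:{ intros [xa xb] [[_ [_ [Hx _]]] [[Hxa _] Hxb]]. simpl in *. subst xb.
      f_equal. apply Hcu. split.
      - exact (eq_sym Hx).
      - rewrite comp_id_r. exact Hxa. }
  split; [|split; [split; simpl; [exact Hc2'|reflexivity]|reflexivity]].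
  simpl.
  split; [exact (Mstab _ _ _ _ chi f' f'' g Mg (pb_sym Hpb1))|].
  split; [exact Mg|]. split; [exact (eq_sym Hc1)|].
  split; [exact Hc1|]. split; [exact Hpb1|].
  intros X Y u v w Hpuv t Ht.
  destruct (Hpb X B' B u beta Hb) as [P [p1 [p2 Hpq]]].
  pose proof Hpq as [Hq _].
  pose proof (pb_paste Hpq Hpuv) as Hpaste.
  assert (E3 : beta \o p2 = f' \o (t \o p1)).
  { rewrite comp_assoc, Ht. exact (eq_sym Hq). }
  destruct (proj2 Hpbk P p2 (t \o p1) E3) as [t' [[Ht1' Ht2'] _]].
  destruct (Hunivp P Y p2 (v \o p1) w Hpaste t' Ht1') as [y [[Hy1 Hy2] Hyu]].
  exists y. split.
  - split; [exact Hy1|].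
    destruct (Hunivp P X p2 p1 (g \o u) (pb_mono (pb_sym Hpq) gm) t' Ht1')
      as [z [_ Hzu]].
    transitivity z; [symmetry|]; apply Hzu; split.
    + rewrite comp_assoc, Hy1. exact (eq_sym (proj1 Hpuv)).
    + rewrite <- comp_assoc. exact Hy2.
    + rewrite comp_assoc, Hc1, <- comp_assoc, Ht. reflexivity.
    + rewrite <- comp_assoc, <- Ht2', comp_assoc, Hc2'. reflexivity.
  - intros y' [Hy1' Hy2']. apply Hyu. split; [exact Hy1'|].
    rewrite comp_assoc, Hy2', <- comp_assoc, <- Ht2', comp_assoc, Hc2'. reflexivity.
Qed.
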